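(* (1) The region $\mathcal R(D_x,D_z)$ is convex. (2) The region $\mathcal R(D_x,D_z)$ is unchanged if, in its definition, the auxiliary alphabets are restricted to satisfy $|\mathcal U|\le|\mathcal Y|+4$, $|\mathcal V|\le|\mathcal Z||\mathcal U|+3$, $|\mathcal W|\le|\mathcal U||\mathcal V||\mathcal X|+1$.
   Context: Let $\mathcal X,\mathcal Y,\mathcal Z$ be finite alphabets and $(X,Y,Z)\sim p(x,y,z)=p(x,y)p(z|x)$ (so $Y-X-Z$ is Markov). Let $\hat{\mathcal X},\hat{\mathcal Z}$ be finite alphabets and $d_x:\mathcal X\times\hat{\mathcal X}\to[0,\infty)$, $d_z:\mathcal Z\times\hat{\mathcal Z}\to[0,\infty)$. $\mathcal R(D_x,D_z)$ is the set of all rate triples $(R_1,R_2,R_3)$ such that $R_1\ge I(Y;U|Z)$, $R_2\ge I(Z;V|U,X)$, $R_3\ge I(X;W|U,V,Z)$ for some finite-alphabet random variables $U\in\mathcal U,V\in\mathcal V,W\in\mathcal W$ with joint distribution $p(x,y,z,u,v,w)=p(x,y)p(z|x)p(u|y)p(v|u,z)p(w|u,v,x)$ and deterministic functions $\hat X(U,W,Z)$, $\hat Z(U,V,X)$ with $\mathbb E\, d_x(X,\hat X(U,W,Z))\le D_x$ and $\mathbb E\, d_z(Z,\hat Z(U,V,X))\le D_z$. *)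

(* Defs.v *)
From HB Require Import structures.
From mathcomp Require Import all_boot all_order all_algebra.
From mathcomp Require Import Rstruct.
From Stdlib Require Rdefinitions Rpower.

Set Implicit Arguments.
Unset Strict Implicit.
Unset Printing Implicit Defensive.
Import Order.TTheory GRing.Theory Num.Theory.
Local Open Scope ring_scope.

Notation R := Rdefinitions.R.

Definition log2 (x : R) : R := Rpower.ln x / Rpower.ln 2.

Definition pmf (T : finType) (p : T -> R) : Prop :=
  (forall t, 0 <= p t) /\ \sum_(t : T) p t = 1.

Definition channel (A B : finType) (k : A -> B -> R) : Prop :=
  forall a, pmf (k a).

Definition prob (O : finType) (P : O -> R) (E : pred O) : R :=
  \sum_(o | E o) P o.

Definition expect (O : finType) (P : O -> R) (f : O -> R) : R :=
  \sum_(o : O) P o * f o.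

Definition cmi (O : finType) (P : O -> R) (TA TB TC : finType)
    (A : O -> TA) (B : O -> TB) (C : O -> TC) : R :=
  \sum_(a : TA) \sum_(b : TB) \sum_(c : TC)
    let pabc := prob P (fun o => [&& A o == a, B o == b & C o == c]) in
    let pac := prob P (fun o => (A o == a) && (C o == c)) in
    let pbc := prob P (fun o => (B o == b) && (C o == c)) in
    let pc := prob P (fun o => C o == c) in
    if 0 < pabc then pabc * log2 (pabc * pc / (pac * pbc)) else 0.

Section Region.
Variables (X Y Z Xh Zh : finType).
Variables (pxy : X -> Y -> R) (pzx : X -> Z -> R).
Variables (dx : X -> Xh -> R) (dz : Z -> Zh -> R) (Dx Dz : R).

Definition joint (U V W : finType) (pu : Y -> U -> R) (pv : U -> Z -> V -> R)
    (pw : U -> V -> X -> W -> R) (o : X * Y * Z * U * V * W) : R :=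
  let: (x, y, z, u, v, w) := o in
  pxy x y * pzx x z * pu y u * pv u z v * pw u v x w.

Definition oX U V W (o : X * Y * Z * U * V * W) : X := let: (x,_,_,_,_,_) := o in x.
Definition oY U V W (o : X * Y * Z * U * V * W) : Y := let: (_,y,_,_,_,_) := o in y.
Definition oZ U V W (o : X * Y * Z * U * V * W) : Z := let: (_,_,z,_,_,_) := o in z.
Definition oU U V W (o : X * Y * Z * U * V * W) : U := let: (_,_,_,u,_,_) := o in u.
Definition oV U V W (o : X * Y * Z * U * V * W) : V := let: (_,_,_,_,v,_) := o in v.
Definition oW U V W (o : X * Y * Z * U * V * W) : W := let: (_,_,_,_,_,w) := o in w.

Definition achievable (U V W : finType) (r : R * R * R) : Prop :=
  exists (pu : Y -> U -> R) (pv : U -> Z -> V -> R) (pw : U -> V -> X -> W -> R)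
         (xhat : U -> W -> Z -> Xh) (zhat : U -> V -> X -> Zh),
    [/\ channel pu, (forall u, channel (pv u)), (forall u v, channel (pw u v)) &
      let P := joint pu pv pw in
      [/\ cmi P (@oY U V W) (@oU U V W) (@oZ U V W) <= r.1.1,
          cmi P (@oZ U V W) (@oV U V W) (fun o => (oU o, oX o)) <= r.1.2,
          cmi P (@oX U V W) (@oW U V W) (fun o => (oU o, oV o, oZ o)) <= r.2,
          expect P (fun o => dx (oX o) (xhat (oU o) (oW o) (oZ o))) <= Dx &
          expect P (fun o => dz (oZ o) (zhat (oU o) (oV o) (oX o))) <= Dz]].

Definition region (r : R * R * R) : Prop :=
  exists U V W : finType, achievable U V W r.

Definition region_card (r : R * R * R) : Prop :=
  exists U V W : finType,
    [/\ #|U| <= #|Y| + 4, #|V| <= #|Z| * #|U| + 3,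
        #|W| <= #|U| * #|V| * #|X| + 1 & achievable U V W r]%N.

End Region.

(* Main.v *)
Require Import Defs.
From HB Require Import structures.
From mathcomp Require Import all_boot all_order all_algebra.
From mathcomp Require Import Rstruct.
From mathcomp Require Import ring lra zify.
Import Order.TTheory GRing.Theory Num.Theory.
Local Open Scope ring_scope.
Set Implicit Arguments. Unset Strict Implicit. Unset Printing Implicit Defensive.

Lemma sum_inj (T T' : finType) (f : T -> T') (F : T' -> R) :
  injective f -> (forall t', (forall t, f t != t') -> F t' = 0) ->
  \sum_(t' : T') F t' = \sum_(t : T) F (f t).
Proof.
move=> finj F0.
rewrite (bigID (fun t' => t' \in [set f t | t in predT])) /=.
rewrite [X in _ + X]big1 ?addr0; last first.
  move=> t' Hn; apply: F0 => t; apply/eqP => Ht; move/negP: Hn; apply.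
  by apply/imsetP; exists t.
by rewrite big_imset //= => x y _ _; apply: finj.
Qed.

Lemma ratioC (s a b c d : R) : s != 0 -> (s*a)*(s*b)/((s*c)*(s*d)) = a*b/(c*d).
Proof.
move=> hs; rewrite !invfM.
transitivity (a*b*(c^-1*d^-1)*((s*s^-1)*(s*s^-1))); first ring.
by rewrite mulfV // !mulr1.
Qed.

Lemma ratioB (s a b c d c' d': R) : s != 0 -> c'/d' = c/d ->
  (s*a)*c'/(d'*(s*b)) = a*c/(d*b).
Proof.
move=> hs h; rewrite !invfM.
transitivity (a*b^-1*(c'/d')*(s*s^-1)); first ring.
by rewrite mulfV // mulr1 h; ring.
Qed.

Lemma pt_sum (K : finType) (s : K -> R) k0 t0 :
  \sum_k s k * (if k0 == k then t0 else 0) = s k0 * t0.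
Proof.
rewrite (bigD1 k0) //= eqxx big1 ?addr0 // => k hk.
by rewrite eq_sym (negbTE hk) mulr0.
Qed.

Lemma regroup (T K : finType) (k : T -> K) (s : K -> R) (t : T -> R) :
  \sum_x s (k x) * t x = \sum_kk s kk * \sum_x (if k x == kk then t x else 0).
Proof.
symmetry.
under eq_bigr => kk _ do rewrite big_distrr /=.
rewrite exchange_big /=; apply: eq_bigr => x _.
by rewrite pt_sum.
Qed.

Lemma regroup3 (TA TB TC K : finType) (k : TA -> TB -> TC -> K) (s : K -> R)
   (t : TA -> TB -> TC -> R) :
  \sum_a \sum_b \sum_c s (k a b c) * t a b c =
  \sum_kk s kk * \sum_a \sum_b \sum_c (if k a b c == kk then t a b c else 0).
Proof.
symmetry.
under eq_bigr => kk _ do rewrite big_distrr /=.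
rewrite exchange_big /=; apply: eq_bigr => a _.
under eq_bigr => kk _ do rewrite big_distrr /=.
rewrite exchange_big /=; apply: eq_bigr => b _.
under eq_bigr => kk _ do rewrite big_distrr /=.
rewrite exchange_big /=; apply: eq_bigr => c _.
by rewrite pt_sum.
Qed.

Section ProbGen.
Variable O : finType.
Implicit Types (P : O -> R).

Lemma probE P E : prob P E = \sum_o (if E o then P o else 0).
Proof. by rewrite /prob big_mkcond. Qed.

Lemma prob_ext P P' E : (forall o, P o = P' o) -> prob P E = prob P' E.
Proof. by move=> h; apply: eq_bigr. Qed.

Lemma prob_eqE P E E' : (forall o, E o = E' o) -> prob P E = prob P E'.
Proof. by move=> h; apply: eq_bigl. Qed.

Lemma prob_marg (TM : finType) P (M : O -> TM) (E : pred TM) :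
  prob P (fun o => E (M o)) =
  \sum_m (if E m then prob P (fun o => M o == m) else 0).
Proof.
rewrite probE.
transitivity (\sum_o (if E (M o) then 1 else 0) * P o).
  by apply: eq_bigr => o _; case: ifP; rewrite ?mul1r ?mul0r.
rewrite (regroup M (fun m => if E m then 1 else 0)).
by apply: eq_bigr => m _; rewrite probE; case: ifP; rewrite ?mul1r ?mul0r.
Qed.

Lemma prob_margP (TM : finType) P P' (M : O -> TM) (al : R) (E : pred O) (E' : pred TM) :
  (forall m, prob P' (fun o => M o == m) = al * prob P (fun o => M o == m)) ->
  (forall o, E o = E' (M o)) ->
  prob P' E = al * prob P E.
Proof.
move=> hm hE.
rewrite (prob_eqE P' hE) (prob_eqE P hE) !prob_marg big_distrr.
by apply: eq_bigr => m _ /=; case: ifP => _; rewrite ?hm ?mulr0.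
Qed.

Definition cterm P (TA TB TC : finType) (A : O -> TA) (B : O -> TB) (C : O -> TC) a b c : R :=
    let pabc := prob P (fun o => [&& A o == a, B o == b & C o == c]) in
    let pac := prob P (fun o => (A o == a) && (C o == c)) in
    let pbc := prob P (fun o => (B o == b) && (C o == c)) in
    let pc := prob P (fun o => C o == c) in
    if 0 < pabc then pabc * log2 (pabc * pc / (pac * pbc)) else 0.

Lemma cmiE P (TA TB TC : finType) (A : O -> TA) (B : O -> TB) (C : O -> TC) :
  cmi P A B C = \sum_a \sum_b \sum_c cterm P A B C a b c.
Proof. by []. Qed.

Lemma cmi_marg (TM : finType) P P' (M : O -> TM) (TA TB TC : finType)
  (A : O -> TA) (B : O -> TB) (C : O -> TC) fA fB fC :
  (forall o, A o = fA (M o)) -> (forall o, B o = fB (M o)) ->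
  (forall o, C o = fC (M o)) ->
  (forall m, prob P' (fun o => M o == m) = prob P (fun o => M o == m)) ->
  cmi P' A B C = cmi P A B C.
Proof.
move=> hA hB hC hm.
have hm' : forall m, prob P' (fun o => M o == m) = 1 * prob P (fun o => M o == m).
  by move=> m; rewrite mul1r.
rewrite !cmiE; apply: eq_bigr => a _; apply: eq_bigr => b _; apply: eq_bigr => c _.
rewrite /cterm.
have cl : forall (E : pred O) (E' : pred TM), (forall o, E o = E' (M o)) -> prob P' E = prob P E.
  by move=> E E' h; rewrite (prob_margP hm' h) mul1r.
rewrite (cl (fun o => [&& A o == a, B o == b & C o == c])
            (fun m => [&& fA m == a, fB m == b & fC m == c])); last by move=> o; rewrite hA hB hC.
rewrite (cl (fun o => (A o == a) && (C o == c))
            (fun m => (fA m == a) && (fC m == c))); last by move=> o; rewrite hA hC.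
rewrite (cl (fun o => (B o == b) && (C o == c))
            (fun m => (fB m == b) && (fC m == c))); last by move=> o; rewrite hB hC.
by rewrite (cl (fun o => (C o == c)) (fun m => (fC m == c))) // => o; rewrite hC.
Qed.

Lemma prob_scale (TK : finType) P P' (K : O -> TK) (s : TK -> R) (E : pred O) k0 :
  (forall o, P' o = s (K o) * P o) -> (forall o, E o -> K o = k0) ->
  prob P' E = s k0 * prob P E.
Proof.
move=> hP hE; rewrite /prob big_distrr; apply: eq_bigr => o Eo.
by rewrite hP (hE o Eo).
Qed.

Lemma cmi_scaleC P P' (TA TB TC : finType) (A : O -> TA) (B : O -> TB) (C : O -> TC) (s : TC -> R) :
  (forall c, 0 <= s c) -> (forall o, P' o = s (C o) * P o) ->
  cmi P' A B C = \sum_a \sum_b \sum_c s c * cterm P A B C a b c.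
Proof.
move=> s0 hP; rewrite cmiE.
apply: eq_bigr => a _; apply: eq_bigr => b _; apply: eq_bigr => c _.
rewrite /cterm.
rewrite (prob_scale (k0 := c) hP); last by move=> o /and3P [_ _ /eqP].
rewrite (prob_scale (E := fun o => (A o == a) && (C o == c)) (k0 := c) hP);
  last by move=> o /andP [_ /eqP].
rewrite (prob_scale (E := fun o => (B o == b) && (C o == c)) (k0 := c) hP);
  last by move=> o /andP [_ /eqP].
rewrite (prob_scale (E := fun o => (C o == c)) (k0 := c) hP); last by move=> o /eqP.
have := s0 c; rewrite le0r => /orP [/eqP -> | sp].
  by rewrite !mul0r ltxx.
rewrite pmulr_rgt0 //; case: ifP => _; last by rewrite mulr0.
by rewrite ratioC ?mulrA // lt0r_neq0.
Qed.

Lemma cmi_scaleB P P' (TA TB TC : finType) (A : O -> TA) (B : O -> TB) (C : O -> TC) (s : TB -> R) :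
  (forall b, 0 <= s b) -> (forall o, P' o = s (B o) * P o) ->
  (forall a c, prob P' (fun o => C o == c) / prob P' (fun o => (A o == a) && (C o == c))
             = prob P (fun o => C o == c) / prob P (fun o => (A o == a) && (C o == c))) ->
  cmi P' A B C = \sum_a \sum_b \sum_c s b * cterm P A B C a b c.
Proof.
move=> s0 hP hr; rewrite cmiE.
apply: eq_bigr => a _; apply: eq_bigr => b _; apply: eq_bigr => c _.
rewrite /cterm.
rewrite (prob_scale (k0 := b) hP); last by move=> o /and3P [_ /eqP].
rewrite (prob_scale (E := fun o => (B o == b) && (C o == c)) (k0 := b) hP);
  last by move=> o /andP [/eqP].
have := s0 b; rewrite le0r => /orP [/eqP -> | sp].
  by rewrite !mul0r ltxx.
rewrite pmulr_rgt0 //; case: ifP => _; last by rewrite mulr0.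
by rewrite (ratioB _ _ _ (hr a c)) ?lt0r_neq0 // mulrA.
Qed.

Lemma expect_scale (TK : finType) P P' (K : O -> TK) (s : TK -> R) f :
  (forall o, P' o = s (K o) * P o) ->
  expect P' f = \sum_kk s kk * \sum_o (if K o == kk then P o * f o else 0).
Proof.
move=> hP; rewrite /expect -regroup; apply: eq_bigr => o _.
by rewrite hP mulrA.
Qed.

Lemma expect_marg (TM : finType) P P' (M : O -> TM) (g : TM -> R) f :
  (forall o, f o = g (M o)) ->
  (forall m, prob P' (fun o => M o == m) = prob P (fun o => M o == m)) ->
  expect P' f = expect P f.
Proof.
move=> hf hm.
have e : forall Q : O -> R, expect Q f = \sum_m g m * prob Q (fun o => M o == m).
  move=> Q; rewrite /expect.
  transitivity (\sum_o g (M o) * Q o); first by apply: eq_bigr => o _; rewrite hf mulrC.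
  by rewrite regroup; apply: eq_bigr => m _; rewrite probE.
by rewrite !e; apply: eq_bigr => m _; rewrite hm.
Qed.

End ProbGen.

Lemma prob_embed (O O' : finType) (phi : O -> O') (P : O -> R) (P' : O' -> R) (E : pred O') :
  injective phi -> (forall o, P' (phi o) = P o) ->
  (forall o', (forall o, phi o != o') -> P' o' = 0) ->
  prob P' E = prob P (fun o => E (phi o)).
Proof.
move=> inj hP h0; rewrite !probE (sum_inj inj).
  by apply: eq_bigr => o _; rewrite hP.
by move=> o' h; rewrite h0 //; case: ifP.
Qed.

Lemma expect_embed (O O' : finType) (phi : O -> O') (P : O -> R) (P' : O' -> R) f :
  injective phi -> (forall o, P' (phi o) = P o) ->
  (forall o', (forall o, phi o != o') -> P' o' = 0) ->
  expect P' f = expect P (fun o => f (phi o)).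
Proof.
move=> inj hP h0; rewrite /expect (sum_inj inj).
  by apply: eq_bigr => o _; rewrite hP.
by move=> o' h; rewrite h0 // mul0r.
Qed.

Lemma cterm_congr (O O' : finType) (P : O -> R) (P' : O' -> R) (TA TB TC TA' TB' TC' : finType)
  (A : O -> TA) (B : O -> TB) (C : O -> TC) (A' : O' -> TA') (B' : O' -> TB') (C' : O' -> TC')
  a b c a' b' c' :
  prob P' (fun o => [&& A' o == a', B' o == b' & C' o == c']) =
     prob P (fun o => [&& A o == a, B o == b & C o == c]) ->
  prob P' (fun o => (A' o == a') && (C' o == c')) = prob P (fun o => (A o == a) && (C o == c)) ->
  prob P' (fun o => (B' o == b') && (C' o == c')) = prob P (fun o => (B o == b) && (C o == c)) ->
  prob P' (fun o => C' o == c') = prob P (fun o => C o == c) ->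
  cterm P' A' B' C' a' b' c' = cterm P A B C a b c.
Proof. by move=> h1 h2 h3 h4; rewrite /cterm h1 h2 h3 h4. Qed.

Lemma cterm0 (O : finType) (P : O -> R) (TA TB TC : finType)
  (A : O -> TA) (B : O -> TB) (C : O -> TC) a b c :
  prob P (fun o => [&& A o == a, B o == b & C o == c]) = 0 -> cterm P A B C a b c = 0.
Proof. by move=> h; rewrite /cterm h ltxx. Qed.

Lemma cmi_embed (O O' : finType) (phi : O -> O') (P : O -> R) (P' : O' -> R)
  (TA TB TC TA' TB' TC' : finType)
  (A : O -> TA) (B : O -> TB) (C : O -> TC) (A' : O' -> TA') (B' : O' -> TB') (C' : O' -> TC')
  (fa : TA -> TA') (fb : TB -> TB') (fc : TC -> TC') :
  injective phi -> injective fa -> injective fb -> injective fc ->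
  (forall o, P' (phi o) = P o) ->
  (forall o', (forall o, phi o != o') -> P' o' = 0) ->
  (forall o, A' (phi o) = fa (A o)) -> (forall o, B' (phi o) = fb (B o)) ->
  (forall o, C' (phi o) = fc (C o)) ->
  cmi P' A' B' C' = cmi P A B C.
Proof.
move=> iphi ia ib ic hP h0 hA hB hC.
have pe : forall E, prob P' E = prob P (fun o => E (phi o)) by move=> E; apply: prob_embed.
have z : forall a' b' c', prob P (fun o => [&& fa (A o) == a', fb (B o) == b' & fc (C o) == c'])
   = 0 -> cterm P' A' B' C' a' b' c' = 0.
  move=> a' b' c' h; apply: cterm0; rewrite pe -h; apply: prob_eqE => o.
  by rewrite hA hB hC.
rewrite !cmiE (sum_inj (f := fa)) //; last first.
  move=> a' ha; apply: big1 => b' _; apply: big1 => c' _; apply: z.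
  by rewrite probE big1 // => o _; case: ifP => // /and3P [/eqP h _ _]; move: (ha (A o)); rewrite h eqxx.
apply: eq_bigr => a _; rewrite (sum_inj (f := fb)) //; last first.
  move=> b' hb; apply: big1 => c' _; apply: z.
  by rewrite probE big1 // => o _; case: ifP => // /and3P [_ /eqP h _]; move: (hb (B o)); rewrite h eqxx.
apply: eq_bigr => b _; rewrite (sum_inj (f := fc)) //; last first.
  move=> c' hc; apply: z.
  by rewrite probE big1 // => o _; case: ifP => // /and3P [_ _ /eqP h]; move: (hc (C o)); rewrite h eqxx.
apply: eq_bigr => c _; apply: cterm_congr; rewrite pe; apply: prob_eqE => o;
  by rewrite ?hA ?hB ?hC ?(inj_eq ia) ?(inj_eq ib) ?(inj_eq ic).
Qed.

Lemma kernel_exists (K CT : finType) (G : CT -> K -> R) :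
  (#|CT| < #|K|)%N ->
  exists d : K -> R, (exists k, d k != 0) /\ forall ct, \sum_k d k * G ct k = 0.
Proof.
move=> hc.
pose M : 'M[R]_(#|K|, #|CT|) := \matrix_(i, j) G (enum_val j) (enum_val i).
have rk : (0 < \rank (kermx M))%N.
  rewrite mxrank_ker; have := rank_leq_col M; lia.
have knz : kermx M != 0 by rewrite -mxrank_eq0 -lt0n.
have [i [j hij]] : exists i j, kermx M i j != 0.
  case: (boolP [exists i, [exists j, kermx M i j != 0]]) =>
     [/existsP [i /existsP [j h]] | /existsPn h]; first by exists i, j.
  move/negP: knz; case; apply/eqP/matrixP => i j.
  by move/existsPn: (h i) => /(_ j) /negPn /eqP ->; rewrite mxE.
pose v := row i (kermx M).
have hv : v *m M = 0 by apply/eqP; rewrite -sub_kermx row_sub.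
exists (fun k => v 0 (enum_rank k)); split.
  by exists (enum_val j); rewrite enum_valK mxE.
move=> ct.
transitivity ((v *m M) 0 (enum_rank ct)); last by rewrite hv mxE.
rewrite mxE (@sum_inj _ K (fun i : 'I_#|K| => enum_val i : K)); last 2 first.
- exact: enum_val_inj.
- by move=> k' h; move: (h (enum_rank k')); rewrite enum_rankK eqxx.
by apply: eq_bigr => k _; rewrite enum_valK !mxE enum_rankK.
Qed.

Definition supp (K : finType) (s : K -> R) := [set k | s k != 0].

Lemma sigma_neg (K J : finType) (e : J -> K -> R) (s0 sg : K -> R) :
  (forall k, s0 k != 0 -> 0 < \sum_j e j k) ->
  (forall j, \sum_k sg k * e j k = 0) ->
  (forall k, s0 k = 0 -> sg k = 0) -> (exists k, sg k != 0) ->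
  exists k, sg k < 0.
Proof.
move=> hpos he h0 [k1 hk1].
have hs : \sum_k sg k * (\sum_j e j k) = 0.
  under eq_bigr do rewrite big_distrr /=.
  by rewrite exchange_big /= big1 // => j _; apply: he.
case: (boolP [exists k, sg k < 0]) => [/existsP // | /existsPn hn].
have nn : forall k, 0 <= sg k * (\sum_j e j k).
  move=> k; have := hn k; rewrite -leNgt => hk.
  case: (eqVneq (s0 k) 0) => [/h0 -> | /hpos hp]; first by rewrite mul0r.
  by rewrite mulr_ge0 // ltW.
have := (psumr_eq0P (fun k _ => nn k) hs) k1 isT.
have s1 : s0 k1 != 0 by apply: contra hk1 => /eqP /h0 ->.
move/eqP; rewrite mulf_eq0 (negbTE hk1) /= => /eqP hz.
by move: (hpos _ s1); rewrite hz ltxx.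
Qed.

Lemma reduce_step (K J I : finType) (e : J -> K -> R) (c0 : K -> R) (cs : I -> K -> R)
   (s0 sg : K -> R) :
  (forall k, 0 <= s0 k) -> (forall k, s0 k != 0 -> 0 < \sum_j e j k) ->
  (forall j, \sum_k sg k * e j k = 0) -> (forall i, \sum_k sg k * cs i k = 0) ->
  (forall k, s0 k = 0 -> sg k = 0) -> (exists k, sg k != 0) ->
  \sum_k sg k * c0 k <= 0 ->
  exists s1 : K -> R, [/\ (forall k, 0 <= s1 k), (forall k, s1 k != 0 -> s0 k != 0),
     (#|supp s1| < #|supp s0|)%N,
     (forall j, \sum_k s1 k * e j k = \sum_k s0 k * e j k) &
     \sum_k s1 k * c0 k <= \sum_k s0 k * c0 k /\
     (forall i, \sum_k s1 k * cs i k = \sum_k s0 k * cs i k)].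
Proof.
move=> hs0 hpos he hc h0 hnz hc0.
have [kn hkn] := sigma_neg hpos he h0 hnz.
pose rat k := s0 k / - sg k.
have [km hkm hmin] : exists2 km, sg km < 0 & forall k, sg k < 0 -> rat km <= rat k.
  by case: (arg_minP (P := fun k => sg k < 0) rat hkn) => km h1 h2; exists km.
pose t := rat km.
have t0 : 0 <= t by rewrite /t /rat divr_ge0 // oppr_ge0 ltW.
pose s1 k := s0 k + t * sg k.
have lin : forall f : K -> R, \sum_k s1 k * f k = \sum_k s0 k * f k + t * \sum_k sg k * f k.
  move=> f; rewrite big_distrr -big_split /=; apply: eq_bigr => k _.
  by rewrite /s1; ring.
exists s1; split.
- move=> k; rewrite /s1; case: (ltP (sg k) 0) => hk; last by rewrite addr_ge0 // mulr_ge0.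
  have pz : 0 < - sg k by rewrite oppr_gt0.
  have hh : t * - sg k <= s0 k by rewrite -ler_pdivlMr //; exact: hmin k hk.
  lra.
- move=> k; apply: contra => /eqP hk; by rewrite /s1 hk (h0 k hk) mulr0 addr0.
- apply: proper_card; apply/properP; split.
    apply/subsetP => k; rewrite !inE; apply: contra => /eqP hk.
    by rewrite /s1 hk (h0 k hk) mulr0 addr0.
  exists km; rewrite !inE.
    by apply: contraTneq hkm => hz; rewrite (h0 km hz) ltxx.
  rewrite negbK /s1 /t /rat; apply/eqP; field.
  by rewrite ltr0_neq0.
- by move=> j; rewrite lin he mulr0 addr0.
- split; first by rewrite lin; have := mulr_ge0_le0 t0 hc0; lra.
  by move=> i; rewrite lin hc mulr0 addr0.
Qed.

Lemma reduce (K J I : finType) (e : J -> K -> R) (c0 : K -> R) (cs : I -> K -> R)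
   (s0 : K -> R) :
  (forall k, 0 <= s0 k) -> (forall k, s0 k != 0 -> 0 < \sum_j e j k) ->
  exists s : K -> R, [/\ (forall k, 0 <= s k), (forall k, s k != 0 -> s0 k != 0),
     (#|supp s| <= #|J| + #|I|)%N,
     (forall j, \sum_k s k * e j k = \sum_k s0 k * e j k) &
     \sum_k s k * c0 k <= \sum_k s0 k * c0 k /\
     (forall i, \sum_k s k * cs i k <= \sum_k s0 k * cs i k)].
Proof.
suff : forall n s0, (#|supp s0| <= n)%N -> (forall k, 0 <= s0 k) ->
   (forall k, s0 k != 0 -> 0 < \sum_j e j k) ->
  exists s : K -> R, [/\ (forall k, 0 <= s k), (forall k, s k != 0 -> s0 k != 0),
     (#|supp s| <= #|J| + #|I|)%N,
     (forall j, \sum_k s k * e j k = \sum_k s0 k * e j k) &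
     \sum_k s k * c0 k <= \sum_k s0 k * c0 k /\
     (forall i, \sum_k s k * cs i k <= \sum_k s0 k * cs i k)].
  by move=> h; apply: (h _ s0 (leqnn _)).
elim=> [|n IH] s1 hn hs1 hpos;
  (case: (leqP #|supp s1| (#|J| + #|I|)) => hb;
   [by exists s1; split => //; split => // *; apply: lexx | ]).
  by move: hn; rewrite leqn0 => /eqP h; rewrite h in hb.
pose Z : finType := {k : K | s1 k == 0}.
pose CT : finType := ((J + I) + Z)%type.
pose G (ct : CT) (k : K) : R := match ct with
  | inl (inl j) => e j k | inl (inr i) => cs i k | inr kk => if val kk == k then 1 else 0 end.
have cardZ : (#|Z| + #|supp s1| = #|K|)%N.
  rewrite /Z card_sig -(cardC (supp s1)) addnC; congr (_ + _)%N.
  by apply: eq_card => k; rewrite !inE negbK.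
have hct : (#|CT| < #|K|)%N by rewrite /CT !card_sum; lia.
have [d [hdnz hd]] := kernel_exists G hct.
have de : forall j, \sum_k d k * e j k = 0 by move=> j; exact: (hd (inl (inl j))).
have dc : forall i, \sum_k d k * cs i k = 0 by move=> i; exact: (hd (inl (inr i))).
have d0 : forall k, s1 k = 0 -> d k = 0.
  move=> k hk; have := hd (inr (exist _ k (introT eqP hk))); rewrite /= => h.
  by rewrite -h pt_sum mulr1.
pose sg := if \sum_k d k * c0 k <= 0 then d else (fun k => - d k).
have hsg : forall f : K -> R, \sum_k sg k * f k =
   if \sum_k d k * c0 k <= 0 then \sum_k d k * f k else - \sum_k d k * f k.
  move=> f; rewrite /sg; case: ifP => _ //.
  by rewrite -sumrN; apply: eq_bigr => k _; rewrite mulNr.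
have [s2 [h1 h2 h3 h4 [h5 h6]]] := @reduce_step K J I e c0 cs s1 sg hs1 hpos
   ltac:(by move=> j; rewrite hsg de oppr0; case: ifP)
   ltac:(by move=> i; rewrite hsg dc oppr0; case: ifP)
   ltac:(by move=> k hk; rewrite /sg; case: ifP => _ /=; rewrite d0 ?oppr0)
   ltac:(by case: hdnz => k hk; exists k; rewrite /sg; case: ifP => _ /=; rewrite ?oppr_eq0)
   ltac:(by rewrite hsg; case: ifP => // /negbT; rewrite -ltNge oppr_le0 => /ltW).
have [s [g1 g2 g3 g4 [g5 g6]]] := IH s2 ltac:(by rewrite -ltnS; exact: leq_trans h3 hn)
   h1 (fun k hk => hpos k (h2 k hk)).
exists s; split => //.
- by move=> k hk; apply: h2; apply: g2.
- by move=> j; rewrite g4 h4.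
- split; first exact: le_trans g5 h5.
  by move=> i; rewrite -h6; apply: g6.
Qed.

Section Schemes.
Variables (X Y Z Xh Zh : finType).
Variables (pxy : X -> Y -> R) (pzx : X -> Z -> R).
Variables (dx : X -> Xh -> R) (dz : Z -> Zh -> R) (Dx Dz : R).

Definition valid (U V W : finType) (pu : Y -> U -> R) (pv : U -> Z -> V -> R)
    (pw : U -> V -> X -> W -> R) :=
  [/\ channel pu, (forall u, channel (pv u)) & (forall u v, channel (pw u v))].

Definition goodq (U V W : finType) (r : R * R * R) (pu : Y -> U -> R) (pv : U -> Z -> V -> R)
    (pw : U -> V -> X -> W -> R) (xhat : U -> W -> Z -> Xh) (zhat : U -> V -> X -> Zh) :=
      let P := joint pxy pzx pu pv pw in
      [/\ cmi P (@oY X Y Z U V W) (@oU X Y Z U V W) (@oZ X Y Z U V W) <= r.1.1,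
          cmi P (@oZ X Y Z U V W) (@oV X Y Z U V W) (fun o => (oU o, oX o)) <= r.1.2,
          cmi P (@oX X Y Z U V W) (@oW X Y Z U V W) (fun o => (oU o, oV o, oZ o)) <= r.2,
          expect P (fun o => dx (oX o) (xhat (oU o) (oW o) (oZ o))) <= Dx &
          expect P (fun o => dz (oZ o) (zhat (oU o) (oV o) (oX o))) <= Dz].

Lemma achievableP (U V W : finType) r :
  achievable pxy pzx dx dz Dx Dz U V W r <->
  exists pu pv pw xhat zhat, valid pu pv pw /\ @goodq U V W r pu pv pw xhat zhat.
Proof.
split.
  by case=> pu [pv [pw [xh [zh [h1 h2 h3 h4]]]]]; exists pu, pv, pw, xh, zh.
by case=> pu [pv [pw [xh [zh [[h1 h2 h3] h4]]]]]; exists pu, pv, pw, xh, zh.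
Qed.

Lemma channel_sum (A B : finType) (k : A -> B -> R) a : channel k -> \sum_b k a b = 1.
Proof. by move=> h; case: (h a). Qed.
Lemma channel_ge0 (A B : finType) (k : A -> B -> R) a b : channel k -> 0 <= k a b.
Proof. by move=> h; case: (h a). Qed.

Lemma sum_prefix3 (U V W : finType) (F : X * Y * Z * U * V * W -> R) x y z :
  \sum_(o : X * Y * Z * U * V * W) (if (oX o, oY o, oZ o) == (x, y, z) then F o else 0) =
  \sum_u \sum_v \sum_w F (x, y, z, u, v, w).
Proof.
rewrite (@sum_inj _ _ (fun t : U * V * W => (x, y, z, t.1.1, t.1.2, t.2))).
- rewrite pair_bigA pair_bigA; apply: eq_bigr => [[[u v] w]] _ /=.
  by rewrite eqxx.
- by move=> [[u v] w] [[u' v'] w'] [-> -> ->].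
move=> [[[[[x' y'] z'] u] v] w] h /=; case: ifP => // /eqP [ex ey ez].
by move: (h (u, v, w)); rewrite ex ey ez eqxx.
Qed.

Lemma sum_prefix4 (U V W : finType) (F : X * Y * Z * U * V * W -> R) x y z u :
  \sum_(o : X * Y * Z * U * V * W) (if (oX o, oY o, oZ o, oU o) == (x, y, z, u) then F o else 0) =
  \sum_v \sum_w F (x, y, z, u, v, w).
Proof.
rewrite (@sum_inj _ _ (fun t : V * W => (x, y, z, u, t.1, t.2))).
- rewrite pair_bigA; apply: eq_bigr => [[v w]] _ /=.
  by rewrite eqxx.
- by move=> [v w] [v' w'] [-> ->].
move=> [[[[[x' y'] z'] u'] v] w] h /=; case: ifP => // /eqP [ex ey ez eu].
by move: (h (v, w)); rewrite ex ey ez eu eqxx.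
Qed.

Lemma sum_prefix5 (U V W : finType) (F : X * Y * Z * U * V * W -> R) x y z u v :
  \sum_(o : X * Y * Z * U * V * W) (if (oX o, oY o, oZ o, oU o, oV o) == (x, y, z, u, v) then F o else 0) =
  \sum_w F (x, y, z, u, v, w).
Proof.
rewrite (@sum_inj _ _ (fun w : W => (x, y, z, u, v, w))).
- by apply: eq_bigr => w _ /=; rewrite eqxx.
- by move=> w w' [].
move=> [[[[[x' y'] z'] u'] v'] w] h /=; case: ifP => // /eqP [ex ey ez eu ev].
by move: (h w); rewrite ex ey ez eu ev eqxx.
Qed.

Lemma marg3 (U V W : finType) pu pv pw x y z : @valid U V W pu pv pw ->
  prob (joint pxy pzx pu pv pw) (fun o => (oX o, oY o, oZ o) == (x, y, z)) = pxy x y * pzx x z.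
Proof.
case=> hu hv hw; rewrite probE sum_prefix3 /=.
transitivity (pxy x y * pzx x z * \sum_u pu y u * (\sum_v pv u z v * \sum_w pw u v x w)).
  rewrite [RHS]big_distrr /=; apply: eq_bigr => u _ /=.
  rewrite mulrA [RHS]big_distrr /=; apply: eq_bigr => v _ /=.
  rewrite mulrA [RHS]big_distrr /=; apply: eq_bigr => w _ /=; ring.
under eq_bigr => u _ do under eq_bigr => v _ do rewrite (channel_sum _ (hw u v)) mulr1.
under eq_bigr => u _ do rewrite (channel_sum _ (hv u)) mulr1.
by rewrite (channel_sum _ hu) mulr1.
Qed.

Lemma marg4 (U V W : finType) pu pv pw x y z u : @valid U V W pu pv pw ->
  prob (joint pxy pzx pu pv pw) (fun o => (oX o, oY o, oZ o, oU o) == (x, y, z, u)) =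
  pxy x y * pzx x z * pu y u.
Proof.
case=> hu hv hw; rewrite probE sum_prefix4 /=.
transitivity (pxy x y * pzx x z * pu y u * (\sum_v pv u z v * \sum_w pw u v x w)).
  rewrite [RHS]big_distrr /=; apply: eq_bigr => v _ /=.
  rewrite mulrA [RHS]big_distrr /=; apply: eq_bigr => w _ /=; ring.
under eq_bigr => v _ do rewrite (channel_sum _ (hw u v)) mulr1.
by rewrite (channel_sum _ (hv u)) mulr1.
Qed.

Lemma marg5 (U V W : finType) pu pv pw x y z u v : @valid U V W pu pv pw ->
  prob (joint pxy pzx pu pv pw) (fun o => (oX o, oY o, oZ o, oU o, oV o) == (x, y, z, u, v)) =
  pxy x y * pzx x z * pu y u * pv u z v.
Proof.
case=> hu hv hw; rewrite probE sum_prefix5 /=.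
transitivity (pxy x y * pzx x z * pu y u * pv u z v * (\sum_w pw u v x w)).
  by rewrite [RHS]big_distrr; apply: eq_bigr => w _ /=.
by rewrite (channel_sum _ (hw u v)) mulr1.
Qed.


Lemma eq_ler (a b c : R) : a = b -> b <= c -> a <= c.
Proof. by move=> ->. Qed.

Lemma scheme_embed (U V W U' V' W' : finType) (fu : U' -> U) (fv : V' -> V) (fw : W' -> W)
  r pu pv pw xhat zhat :
  injective fu -> injective fv -> injective fw -> @valid U V W pu pv pw ->
  (forall y u, (forall u', fu u' != u) -> pu y u = 0) ->
  (forall u z v, (forall v', fv v' != v) -> pv u z v = 0) ->
  (forall u v x w, (forall w', fw w' != w) -> pw u v x w = 0) ->
  goodq r pu pv pw xhat zhat -> achievable pxy pzx dx dz Dx Dz U' V' W' r.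
Proof.
move=> iu iv iw [hu hv hw] zu zv zw [g1 g2 g3 g4 g5].
apply/achievableP.
exists (fun y u' => pu y (fu u')), (fun u' z v' => pv (fu u') z (fv v')),
  (fun u' v' x w' => pw (fu u') (fv v') x (fw w')),
  (fun u' w' z => xhat (fu u') (fw w') z), (fun u' v' x => zhat (fu u') (fv v') x).
split.
  split.
  - move=> y; split; first by move=> u'; apply: channel_ge0.
    by rewrite -(sum_inj (f := fu)) ?(channel_sum _ hu) // => u h; apply: zu.
  - move=> u' z; split; first by move=> v'; apply: channel_ge0 (hv _).
    by rewrite -(sum_inj (f := fv)) ?(channel_sum _ (hv _)) // => v h; apply: zv.
  - move=> u' v' x; split; first by move=> w'; apply: channel_ge0 (hw _ _).
    by rewrite -(sum_inj (f := fw)) ?(channel_sum _ (hw _ _)) // => w h; apply: zw.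
pose phi (o : X * Y * Z * U' * V' * W') : X * Y * Z * U * V * W :=
  let: (x, y, z, u, v, w) := o in (x, y, z, fu u, fv v, fw w).
have iphi : injective phi.
  move=> [[[[[x y] z] u] v] w] [[[[[x' y'] z'] u'] v'] w'] /= [-> -> ->].
  by move=> /iu -> /iv -> /iw ->.
have h0 : forall o, (forall o', phi o' != o) -> joint pxy pzx pu pv pw o = 0.
  move=> [[[[[x y] z] u] v] w] h /=.
  case: (boolP [exists u', fu u' == u]) => [/existsP [u' /eqP eu] | /existsPn nu];
    last by rewrite (zu y u nu) !(mulr0, mul0r).
  case: (boolP [exists v', fv v' == v]) => [/existsP [v' /eqP ev] | /existsPn nv];
    last by rewrite (zv u z v nv) !(mulr0, mul0r).
  case: (boolP [exists w', fw w' == w]) => [/existsP [w' /eqP ew] | /existsPn nw];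
    last by rewrite (zw u v x w nw) !(mulr0, mul0r).
  by move: (h (x, y, z, u', v', w')); rewrite /= eu ev ew eqxx.
split.
- apply: (eq_ler _ g1); symmetry.
  apply: (cmi_embed (phi := phi) (fa := id) (fb := fu) (fc := id)) => //;
    by case=> [[[[[x y] z] u] v] w].
- apply: (eq_ler _ g2); symmetry.
  apply: (cmi_embed (phi := phi) (fa := id) (fb := fv) (fc := fun p => (fu p.1, p.2))) => //;
    try by case=> [[[[[x y] z] u] v] w].
  by move=> [a b] [c d] /= [/iu -> ->].
- apply: (eq_ler _ g3); symmetry.
  apply: (cmi_embed (phi := phi) (fa := id) (fb := fw)
             (fc := fun p => (fu p.1.1, fv p.1.2, p.2))) => //;
    try by case=> [[[[[x y] z] u] v] w].
  by move=> [[a b] c] [[a' b'] c'] /= [/iu -> /iv -> ->].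
- apply: (eq_ler _ g4); symmetry.
  rewrite (@expect_embed _ _ phi (fun o => joint pxy pzx pu pv pw (phi o))) //.
  by apply: eq_bigr => -[[[[[x y] z] u] v] w] _.
- apply: (eq_ler _ g5); symmetry.
  rewrite (@expect_embed _ _ phi (fun o => joint pxy pzx pu pv pw (phi o))) //.
  by apply: eq_bigr => -[[[[[x y] z] u] v] w] _.
Qed.

End Schemes.

Section RedU.
Variables (X Y Z Xh Zh : finType).
Variables (pxy : X -> Y -> R) (pzx : X -> Z -> R).
Variables (dx : X -> Xh -> R) (dz : Z -> Zh -> R) (Dx Dz : R).

Lemma pos_exists (T : finType) (f : T -> R) : \sum_t f t != 0 -> exists t, f t != 0.
Proof.
move=> h; case: (boolP [exists t, f t != 0]) => [/existsP //|/existsPn hn].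
by move/negP: h; case; rewrite big1 // => t _; apply/eqP; rewrite -[_ == _]negbK hn.
Qed.

Lemma redU (U V W : finType) r :
  pmf (fun xy : X * Y => pxy xy.1 xy.2) -> channel pzx ->
  achievable pxy pzx dx dz Dx Dz U V W r ->
  exists U' : finType, (#|U'| <= #|Y| + 4)%N /\ achievable pxy pzx dx dz Dx Dz U' V W r.
Proof.
move=> [hxy0 hxy1] hzx /achievableP [pu [pv [pw [xhat [zhat [hval hgood]]]]]].
have hval' := hval; case: hval' => hu hv hw.
have pxy0 : forall x y, 0 <= pxy x y by move=> x y; exact: (hxy0 (x, y)).
pose P := joint pxy pzx pu pv pw.
pose py y := \sum_x pxy x y.
have py0 : forall y, 0 <= py y by move=> y; apply: sumr_ge0 => x _.
have pxy_z : forall x y, py y = 0 -> pxy x y = 0.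
  by move=> x y h; move/psumr_eq0P: h => /(_ (fun x _ => pxy0 x y)) /(_ x isT).
pose e y u := py y * pu y u.
have e0 : forall y u, 0 <= e y u by move=> y u; rewrite mulr_ge0 // (channel_ge0 _ _ hu).
pose w u := \sum_y e y u.
pose s0 u : R := if 0 < w u then 1 else 0.
have s0ge : forall u, 0 <= s0 u by move=> u; rewrite /s0; case: ifP.
have s0pos : forall u, s0 u != 0 -> 0 < w u by move=> u; rewrite /s0; case: ifP; rewrite ?eqxx.
have ez : forall y u, s0 u = 0 -> e y u = 0.
  move=> y u; rewrite /s0; case: ifP => [_ /eqP|]; first by rewrite oner_eq0.
  move/negbT; rewrite -leNgt => hwu _.
  have w0 : w u = 0 by apply/eqP; rewrite eq_le hwu sumr_ge0.
  by move/psumr_eq0P: w0 => /(_ (fun y _ => e0 y u)) /(_ y isT).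
pose pus (s : U -> R) (u0 : U) y u : R := if 0 < py y then s u * pu y u else (if u == u0 then 1 else 0).
have JS : forall s u0 o, joint pxy pzx (pus s u0) pv pw o = s (oU o) * P o.
  move=> s u0 [[[[[x y] z] u] v] w'] /=; rewrite /P /= /pus.
  case: ifP => hp; first by ring.
  have -> : pxy x y = 0.
    by apply: pxy_z; apply/eqP; rewrite eq_le py0 andbT leNgt hp.
  by rewrite !(mul0r, mulr0).
have J0 : forall o, P o = s0 (oU o) * P o.
  move=> [[[[[x y] z] u] v] w'] /=; rewrite /s0; case: ifP => hp; first by rewrite mul1r.
  have hs : s0 u = 0 by rewrite /s0 hp.
  move: (ez y u hs); rewrite /e /P /= => /eqP; rewrite mulf_eq0 => /orP [/eqP hy|/eqP ->].
    by rewrite (pxy_z x y hy) !mul0r.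
  by rewrite !(mul0r, mulr0).
pose c0 u := \sum_a \sum_b \sum_c
  (if (fun (_ : Y) (b : U) (_ : Z) => b) a b c == u then cterm P (@oY X Y Z U V W) (@oU X Y Z U V W) (@oZ X Y Z U V W) a b c else 0).
pose f1 u := \sum_a \sum_b \sum_c
  (if (fun (_ : Z) (_ : V) (c : U * X) => c.1) a b c == u
   then cterm P (@oZ X Y Z U V W) (@oV X Y Z U V W) (fun o => (oU o, oX o)) a b c else 0).
pose f2 u := \sum_a \sum_b \sum_c
  (if (fun (_ : X) (_ : W) (c : U * V * Z) => c.1.1) a b c == u
   then cterm P (@oX X Y Z U V W) (@oW X Y Z U V W) (fun o => (oU o, oV o, oZ o)) a b c else 0).
pose f3 u := \sum_o (if @oU X Y Z U V W o == u then P o * dx (oX o) (xhat (oU o) (oW o) (oZ o)) else 0).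
pose f4 u := \sum_o (if @oU X Y Z U V W o == u then P o * dz (oZ o) (zhat (oU o) (oV o) (oX o)) else 0).
pose cs (i : 'I_4) := nth (fun _ => 0) [:: f1; f2; f3; f4] i.
have Q : forall (P' : X * Y * Z * U * V * W -> R) (s : U -> R),
   (forall o, P' o = s (oU o) * P o) -> (forall u, 0 <= s u) ->
   (forall m, prob P' (fun o => (oX o, oY o, oZ o) == m) = prob P (fun o => (oX o, oY o, oZ o) == m)) ->
   [/\ cmi P' (@oY X Y Z U V W) (@oU X Y Z U V W) (@oZ X Y Z U V W) = \sum_u s u * c0 u,
       cmi P' (@oZ X Y Z U V W) (@oV X Y Z U V W) (fun o => (oU o, oX o)) = \sum_u s u * f1 u,
       cmi P' (@oX X Y Z U V W) (@oW X Y Z U V W) (fun o => (oU o, oV o, oZ o)) = \sum_u s u * f2 u,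
       expect P' (fun o => dx (oX o) (xhat (oU o) (oW o) (oZ o))) = \sum_u s u * f3 u &
       expect P' (fun o => dz (oZ o) (zhat (oU o) (oV o) (oX o))) = \sum_u s u * f4 u].
  move=> P' s hP' hs hm.
  have hm1 : forall m, prob P' (fun o => (oX o, oY o, oZ o) == m) = 1 * prob P (fun o => (oX o, oY o, oZ o) == m).
    by move=> m; rewrite mul1r hm.
  split.
  - rewrite (@cmi_scaleB _ P P' _ _ _ (@oY X Y Z U V W) (@oU X Y Z U V W) (@oZ X Y Z U V W) s) //; first by exact: (regroup3 (fun _ b _ => b)).
    move=> a c.
    rewrite (prob_margP (E' := fun m => m.2 == c) hm1) // (prob_margP (E' := fun m => (m.1.2 == a) && (m.2 == c)) hm1) //.
    by rewrite !mul1r.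
  - rewrite (@cmi_scaleC _ P P' _ _ _ (@oZ X Y Z U V W) (@oV X Y Z U V W) _ (fun c => s c.1)) //.
    exact: (regroup3 (fun _ _ c => c.1)).
  - rewrite (@cmi_scaleC _ P P' _ _ _ (@oX X Y Z U V W) (@oW X Y Z U V W) _ (fun c => s c.1.1)) //.
    exact: (regroup3 (fun _ _ c => c.1.1)).
  - exact: expect_scale.
  - exact: expect_scale.
have [q1 q2 q3 q4 q5] := Q P s0 J0 s0ge (fun m => erefl).
have [s [sge ssub scard seq [sc0 scs]]] := @reduce U Y 'I_4 e c0 cs s0 s0ge s0pos.
have sum_py : \sum_y py y = 1.
  rewrite /py exchange_big /= pair_bigA /=; exact: hxy1.
have [y1 hy1] : exists y, py y != 0 by apply: pos_exists; rewrite sum_py oner_eq0.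
have esum : forall y, \sum_u s u * e y u = py y.
  move=> y; rewrite seq.
  transitivity (\sum_u e y u).
    apply: eq_bigr => u _; case: (eqVneq (s0 u) 0) => [h|h]; first by rewrite h mul0r ez.
    by move: h; rewrite /s0; case: ifP; rewrite ?eqxx // => _ _; rewrite mul1r.
  by rewrite /e -big_distrr /= (channel_sum _ hu) mulr1.
have [u0 hu0] : exists u, s u != 0.
  have : \sum_u s u * e y1 u != 0 by rewrite esum.
  case/pos_exists => u hu'; exists u; apply: contra hu' => /eqP ->; by rewrite mul0r.
pose pu' := pus s u0.
have hu' : channel pu'.
  move=> y; split.
    move=> u; rewrite /pu' /pus; case: ifP => _; first by rewrite mulr_ge0 // (channel_ge0 _ _ hu).
    by case: ifP.
  rewrite /pu' /pus; case: (boolP (0 < py y)) => hp; rewrite ?hp ?(negbTE hp).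
    have hpy : py y != 0 by rewrite gt_eqF.
    apply: (mulfI hpy); rewrite mulr1 -{2}(esum y) big_distrr; apply: eq_bigr => u _ /=.
    by rewrite /e; ring.
  by rewrite -big_mkcond big_pred1_eq.
have hval2 : valid pu' pv pw by split.
have hm : forall m, prob (joint pxy pzx pu' pv pw) (fun o => (oX o, oY o, oZ o) == m) =
    prob P (fun o => (oX o, oY o, oZ o) == m).
  by case=> [[x y] z]; rewrite marg3 // marg3.
have [r1 r2 r3 r4 r5] := Q (joint pxy pzx pu' pv pw) s (JS s u0) sge hm.
case: hgood => g1 g2 g3 g4 g5.
exists ({u : U | s u != 0} : finType).
split.
  rewrite card_sig -(card_ord 4); apply: leq_trans scard.
  by rewrite leq_eqVlt; apply/orP; left; apply/eqP; apply: eq_card => u; rewrite !inE.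
apply: (@scheme_embed X Y Z Xh Zh pxy pzx dx dz Dx Dz U V W _ V W val id id r pu' pv pw xhat zhat) => //.
- exact: val_inj.
- move=> y u h; case: (eqVneq (s u) 0) => [hz | hnz]; last by move: (h (exist _ u hnz)); rewrite eqxx.
  rewrite /pu' /pus hz mul0r; case: ifP => // _; case: eqP => // eu.
  by move: hu0; rewrite -eu hz eqxx.
- by move=> u z v h; move: (h v); rewrite eqxx.
- by move=> u v x w' h; move: (h w'); rewrite eqxx.
split.
- by rewrite r1; apply: le_trans g1; rewrite q1.
- have := scs (@Ordinal 4 0 isT); rewrite /cs /= => h.
  by rewrite r2; apply: le_trans g2; rewrite q2.
- have := scs (@Ordinal 4 1 isT); rewrite /cs /= => h.
  by rewrite r3; apply: le_trans g3; rewrite q3.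
- have := scs (@Ordinal 4 2 isT); rewrite /cs /= => h.
  by rewrite r4; apply: le_trans g4; rewrite q4.
- have := scs (@Ordinal 4 3 isT); rewrite /cs /= => h.
  by rewrite r5; apply: le_trans g5; rewrite q5.
Qed.


Lemma sum_ne0 (T : finType) (F : T -> R) i0 : (forall i, 0 <= F i) -> F i0 != 0 -> \sum_i F i != 0.
Proof.
move=> h hi; apply/negP => /eqP hs.
by move/psumr_eq0P: hs => /(_ (fun i _ => h i)) /(_ i0 isT) /eqP; rewrite (negbTE hi).
Qed.

Lemma redV (U V W : finType) r :
  pmf (fun xy : X * Y => pxy xy.1 xy.2) -> channel pzx ->
  achievable pxy pzx dx dz Dx Dz U V W r ->
  exists V' : finType, (#|V'| <= #|Z| * #|U| + 3)%N /\ achievable pxy pzx dx dz Dx Dz U V' W r.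
Proof.
move=> [hxy0 hxy1] hzx /achievableP [pu [pv [pw [xhat [zhat [hval hgood]]]]]].
have hval' := hval; case: hval' => hu hv hw.
have pxy0 : forall x y, 0 <= pxy x y by move=> x y; exact: (hxy0 (x, y)).
pose P := joint pxy pzx pu pv pw.
pose q (u : U) (z : Z) := \sum_x \sum_y pxy x y * pzx x z * pu y u.
have g0 : forall x y z u, 0 <= pxy x y * pzx x z * pu y u.
  by move=> x y z u; rewrite !mulr_ge0 // (channel_ge0 _ _ hzx, channel_ge0 _ _ hu).
have q0 : forall u z, 0 <= q u z by move=> u z; apply: sumr_ge0 => x _; apply: sumr_ge0.
have qz : forall u z x y, q u z = 0 -> pxy x y * pzx x z * pu y u = 0.
  move=> u z x y h.
  have hx : forall x, 0 <= \sum_y pxy x y * pzx x z * pu y u.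
    by move=> x'; apply: sumr_ge0 => y' _; apply: g0.
  move/psumr_eq0P: h => /(_ (fun x _ => hx x)) /(_ x isT) /psumr_eq0P.
  by move=> /(_ (fun y _ => g0 x y z u)) /(_ y isT).
pose e (j : U * Z) v := q j.1 j.2 * pv j.1 j.2 v.
have e0 : forall j v, 0 <= e j v by move=> j v; rewrite mulr_ge0 // (channel_ge0 _ _ (hv _)).
pose w v := \sum_j e j v.
pose s0 v : R := if 0 < w v then 1 else 0.
have s0ge : forall v, 0 <= s0 v by move=> v; rewrite /s0; case: ifP.
have s0pos : forall v, s0 v != 0 -> 0 < w v by move=> v; rewrite /s0; case: ifP; rewrite ?eqxx.
have ez : forall j v, s0 v = 0 -> e j v = 0.
  move=> j v; rewrite /s0; case: ifP => [_ /eqP|]; first by rewrite oner_eq0.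
  move/negbT; rewrite -leNgt => hwv _.
  have w0 : w v = 0 by apply/eqP; rewrite eq_le hwv sumr_ge0.
  by move/psumr_eq0P: w0 => /(_ (fun j _ => e0 j v)) /(_ j isT).
pose pvs (s : V -> R) (v0 : V) u z v : R :=
  if 0 < q u z then s v * pv u z v else (if v == v0 then 1 else 0).
have JS : forall s v0 o, joint pxy pzx pu (pvs s v0) pw o = s (oV o) * P o.
  move=> s v0 [[[[[x y] z] u] v] w'] /=; rewrite /P /= /pvs.
  case: ifP => hp; first by ring.
  have -> : pxy x y * pzx x z * pu y u = 0.
    by apply: qz; apply/eqP; rewrite eq_le q0 andbT leNgt hp.
  by rewrite !(mul0r, mulr0).
have J0 : forall o, P o = s0 (oV o) * P o.
  move=> [[[[[x y] z] u] v] w'] /=; rewrite /s0; case: ifP => hp; first by rewrite mul1r.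
  have hs : s0 v = 0 by rewrite /s0 hp.
  move: (ez (u, z) v hs); rewrite /e /P /= => /eqP; rewrite mulf_eq0 => /orP [/eqP hy|/eqP ->].
    by rewrite (qz u z x y hy) !mul0r.
  by rewrite !(mul0r, mulr0).
pose c0 v := \sum_a \sum_b \sum_c
  (if (fun (_ : Z) (b : V) (_ : U * X) => b) a b c == v
   then cterm P (@oZ X Y Z U V W) (@oV X Y Z U V W) (fun o => (oU o, oX o)) a b c else 0).
pose f1 v := \sum_a \sum_b \sum_c
  (if (fun (_ : X) (_ : W) (c : U * V * Z) => c.1.2) a b c == v
   then cterm P (@oX X Y Z U V W) (@oW X Y Z U V W) (fun o => (oU o, oV o, oZ o)) a b c else 0).
pose f2 v := \sum_o (if @oV X Y Z U V W o == v then P o * dx (oX o) (xhat (oU o) (oW o) (oZ o)) else 0).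
pose f3 v := \sum_o (if @oV X Y Z U V W o == v then P o * dz (oZ o) (zhat (oU o) (oV o) (oX o)) else 0).
pose cs (i : 'I_3) := nth (fun _ => 0) [:: f1; f2; f3] i.
have Q : forall (P' : X * Y * Z * U * V * W -> R) (s : V -> R),
   (forall o, P' o = s (oV o) * P o) -> (forall v, 0 <= s v) ->
   (forall m, prob P' (fun o => (oX o, oY o, oZ o, oU o) == m) =
              prob P (fun o => (oX o, oY o, oZ o, oU o) == m)) ->
   [/\ cmi P' (@oZ X Y Z U V W) (@oV X Y Z U V W) (fun o => (oU o, oX o)) = \sum_v s v * c0 v,
       cmi P' (@oX X Y Z U V W) (@oW X Y Z U V W) (fun o => (oU o, oV o, oZ o)) = \sum_v s v * f1 v,
       expect P' (fun o => dx (oX o) (xhat (oU o) (oW o) (oZ o))) = \sum_v s v * f2 v,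
       expect P' (fun o => dz (oZ o) (zhat (oU o) (oV o) (oX o))) = \sum_v s v * f3 v &
       cmi P' (@oY X Y Z U V W) (@oU X Y Z U V W) (@oZ X Y Z U V W) =
       cmi P (@oY X Y Z U V W) (@oU X Y Z U V W) (@oZ X Y Z U V W)].
  move=> P' s hP' hs hm.
  have hm1 : forall m, prob P' (fun o => (oX o, oY o, oZ o, oU o) == m) =
                       1 * prob P (fun o => (oX o, oY o, oZ o, oU o) == m).
    by move=> m; rewrite mul1r hm.
  split.
  - rewrite (@cmi_scaleB _ P P' _ _ _ (@oZ X Y Z U V W) (@oV X Y Z U V W) _ s) //;
      first by exact: (regroup3 (fun _ b _ => b)).
    move=> a c.
    rewrite (prob_margP (E' := fun m => (m.2, m.1.1.1) == c) hm1) //.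
    rewrite (prob_margP (E' := fun m => (m.1.2 == a) && ((m.2, m.1.1.1) == c)) hm1) //.
    by rewrite !mul1r.
  - rewrite (@cmi_scaleC _ P P' _ _ _ (@oX X Y Z U V W) (@oW X Y Z U V W) _ (fun c => s c.1.2)) //.
    exact: (regroup3 (fun _ _ c => c.1.2)).
  - exact: expect_scale.
  - exact: expect_scale.
  - apply: (cmi_marg (fA := fun m => m.1.1.2) (fB := fun m => m.2) (fC := fun m => m.1.2) _ _ _ hm) => //.
have [q1 q2 q3 q4 q5] := Q P s0 J0 s0ge (fun m => erefl).
have [s [sge ssub scard seq [sc0 scs]]] := @reduce V (U * Z)%type 'I_3 e c0 cs s0 s0ge s0pos.
have esum : forall j, \sum_v s v * e j v = q j.1 j.2.
  move=> j; rewrite seq.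
  transitivity (\sum_v e j v).
    apply: eq_bigr => v _; case: (eqVneq (s0 v) 0) => [h|h]; first by rewrite h mul0r ez.
    by move: h; rewrite /s0; case: ifP; rewrite ?eqxx // => _ _; rewrite mul1r.
  by rewrite /e -big_distrr /= (channel_sum _ (hv _)) mulr1.
have [[x1 y1] h1] : exists xy : X * Y, pxy xy.1 xy.2 != 0 by apply: pos_exists; rewrite hxy1 oner_eq0.
have [z1 h2] : exists z, pzx x1 z != 0 by apply: pos_exists; rewrite (channel_sum _ hzx) oner_eq0.
have [u1 h3] : exists u, pu y1 u != 0 by apply: pos_exists; rewrite (channel_sum _ hu) oner_eq0.
have hq1 : q u1 z1 != 0.
  apply: (sum_ne0 (i0 := x1)) => [x|]; first by apply: sumr_ge0.
  apply: (sum_ne0 (i0 := y1)) => [y|]; first by apply: g0.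
  by rewrite !mulf_neq0.
have [v0 hv0] : exists v, s v != 0.
  have : \sum_v s v * e (u1, z1) v != 0 by rewrite esum.
  case/pos_exists => v hv'; exists v; apply: contra hv' => /eqP ->; by rewrite mul0r.
pose pv' := pvs s v0.
have hv' : forall u, channel (pv' u).
  move=> u z; split.
    move=> v; rewrite /pv' /pvs; case: ifP => _; first by rewrite mulr_ge0 // (channel_ge0 _ _ (hv _)).
    by case: ifP.
  rewrite /pv' /pvs; case: (boolP (0 < q u z)) => hp; rewrite ?hp ?(negbTE hp).
    have hpy : q u z != 0 by rewrite gt_eqF.
    apply: (mulfI hpy); rewrite mulr1 -{2}(esum (u, z)) big_distrr; apply: eq_bigr => v _ /=.
    by rewrite /e; ring.
  by rewrite -big_mkcond big_pred1_eq.
have hval2 : valid pu pv' pw by split.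
have hm : forall m, prob (joint pxy pzx pu pv' pw) (fun o => (oX o, oY o, oZ o, oU o) == m) =
    prob P (fun o => (oX o, oY o, oZ o, oU o) == m).
  by case=> [[[x y] z] u]; rewrite marg4 // marg4.
have [r1 r2 r3 r4 r5] := Q (joint pxy pzx pu pv' pw) s (JS s v0) sge hm.
case: hgood => g1 g2 g3 g4 g5.
exists ({v : V | s v != 0} : finType).
split.
  rewrite card_sig -(card_ord 3) mulnC -card_prod; apply: leq_trans scard.
  by rewrite leq_eqVlt; apply/orP; left; apply/eqP; apply: eq_card => v; rewrite !inE.
apply: (@scheme_embed X Y Z Xh Zh pxy pzx dx dz Dx Dz U V W U _ W id val id r pu pv' pw xhat zhat) => //.
- exact: val_inj.
- by move=> y u h; move: (h u); rewrite eqxx.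
- move=> u z v h; case: (eqVneq (s v) 0) => [hz | hnz]; last by move: (h (exist _ v hnz)); rewrite eqxx.
  rewrite /pv' /pvs hz mul0r; case: ifP => // _; case: eqP => // ev.
  by move: hv0; rewrite -ev hz eqxx.
- by move=> u v x w' h; move: (h w'); rewrite eqxx.
split.
- by rewrite r5.
- by rewrite r1; apply: le_trans g2; rewrite q1.
- have := scs (@Ordinal 3 0 isT); rewrite /cs /= => h.
  by rewrite r2; apply: le_trans g3; rewrite q2.
- have := scs (@Ordinal 3 1 isT); rewrite /cs /= => h.
  by rewrite r3; apply: le_trans g4; rewrite q3.
- have := scs (@Ordinal 3 2 isT); rewrite /cs /= => h.
  by rewrite r4; apply: le_trans g5; rewrite q4.
Qed.


Lemma redW (U V W : finType) r :
  pmf (fun xy : X * Y => pxy xy.1 xy.2) -> channel pzx ->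
  achievable pxy pzx dx dz Dx Dz U V W r ->
  exists W' : finType, (#|W'| <= #|U| * #|V| * #|X| + 1)%N /\ achievable pxy pzx dx dz Dx Dz U V W' r.
Proof.
move=> [hxy0 hxy1] hzx /achievableP [pu [pv [pw [xhat [zhat [hval hgood]]]]]].
have hval' := hval; case: hval' => hu hv hw.
have pxy0 : forall x y, 0 <= pxy x y by move=> x y; exact: (hxy0 (x, y)).
pose P := joint pxy pzx pu pv pw.
pose q (u : U) (v : V) (x : X) := \sum_y \sum_z pxy x y * pzx x z * pu y u * pv u z v.
have g0 : forall x y z u v, 0 <= pxy x y * pzx x z * pu y u * pv u z v.
  move=> x y z u v.
  by rewrite !mulr_ge0 // (channel_ge0 _ _ hzx, channel_ge0 _ _ hu, channel_ge0 _ _ (hv _)).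
have q0 : forall u v x, 0 <= q u v x by move=> u v x; apply: sumr_ge0 => y _; apply: sumr_ge0.
have qz : forall u v x y z, q u v x = 0 -> pxy x y * pzx x z * pu y u * pv u z v = 0.
  move=> u v x y z h.
  have hy : forall y, 0 <= \sum_z pxy x y * pzx x z * pu y u * pv u z v.
    by move=> y'; apply: sumr_ge0 => z' _; apply: g0.
  move/psumr_eq0P: h => /(_ (fun y _ => hy y)) /(_ y isT) /psumr_eq0P.
  by move=> /(_ (fun z _ => g0 x y z u v)) /(_ z isT).
pose e (j : U * V * X) w := q j.1.1 j.1.2 j.2 * pw j.1.1 j.1.2 j.2 w.
have e0 : forall j w, 0 <= e j w by move=> j w; rewrite mulr_ge0 // (channel_ge0 _ _ (hw _ _)).
pose ww w := \sum_j e j w.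
pose s0 w : R := if 0 < ww w then 1 else 0.
have s0ge : forall w, 0 <= s0 w by move=> w; rewrite /s0; case: ifP.
have s0pos : forall w, s0 w != 0 -> 0 < ww w by move=> w; rewrite /s0; case: ifP; rewrite ?eqxx.
have ez : forall j w, s0 w = 0 -> e j w = 0.
  move=> j w; rewrite /s0; case: ifP => [_ /eqP|]; first by rewrite oner_eq0.
  move/negbT; rewrite -leNgt => hwv _.
  have w0 : ww w = 0 by apply/eqP; rewrite eq_le hwv sumr_ge0.
  by move/psumr_eq0P: w0 => /(_ (fun j _ => e0 j w)) /(_ j isT).
pose pws (s : W -> R) (w0 : W) u v x w : R :=
  if 0 < q u v x then s w * pw u v x w else (if w == w0 then 1 else 0).
have JS : forall s w0 o, joint pxy pzx pu pv (pws s w0) o = s (oW o) * P o.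
  move=> s w0 [[[[[x y] z] u] v] w'] /=; rewrite /P /= /pws.
  case: ifP => hp; first by ring.
  have -> : pxy x y * pzx x z * pu y u * pv u z v = 0.
    by apply: qz; apply/eqP; rewrite eq_le q0 andbT leNgt hp.
  by rewrite !(mul0r, mulr0).
have J0 : forall o, P o = s0 (oW o) * P o.
  move=> [[[[[x y] z] u] v] w'] /=; rewrite /s0; case: ifP => hp; first by rewrite mul1r.
  have hs : s0 w' = 0 by rewrite /s0 hp.
  move: (ez (u, v, x) w' hs); rewrite /e /P /= => /eqP; rewrite mulf_eq0 => /orP [/eqP hy|/eqP ->].
    by rewrite (qz u v x y z hy) !mul0r.
  by rewrite !(mul0r, mulr0).
pose c0 w := \sum_a \sum_b \sum_c
  (if (fun (_ : X) (b : W) (_ : U * V * Z) => b) a b c == w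
   then cterm P (@oX X Y Z U V W) (@oW X Y Z U V W) (fun o => (oU o, oV o, oZ o)) a b c else 0).
pose f1 w := \sum_o (if @oW X Y Z U V W o == w then P o * dx (oX o) (xhat (oU o) (oW o) (oZ o)) else 0).
pose cs (i : 'I_1) := f1.
pose M5 (o : X * Y * Z * U * V * W) := (oX o, oY o, oZ o, oU o, oV o).
have Q : forall (P' : X * Y * Z * U * V * W -> R) (s : W -> R),
   (forall o, P' o = s (oW o) * P o) -> (forall w, 0 <= s w) ->
   (forall m, prob P' (fun o => M5 o == m) = prob P (fun o => M5 o == m)) ->
   [/\ cmi P' (@oX X Y Z U V W) (@oW X Y Z U V W) (fun o => (oU o, oV o, oZ o)) = \sum_w s w * c0 w,
       expect P' (fun o => dx (oX o) (xhat (oU o) (oW o) (oZ o))) = \sum_w s w * f1 w,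
       expect P' (fun o => dz (oZ o) (zhat (oU o) (oV o) (oX o))) =
       expect P (fun o => dz (oZ o) (zhat (oU o) (oV o) (oX o))),
       cmi P' (@oY X Y Z U V W) (@oU X Y Z U V W) (@oZ X Y Z U V W) =
       cmi P (@oY X Y Z U V W) (@oU X Y Z U V W) (@oZ X Y Z U V W) &
       cmi P' (@oZ X Y Z U V W) (@oV X Y Z U V W) (fun o => (oU o, oX o)) =
       cmi P (@oZ X Y Z U V W) (@oV X Y Z U V W) (fun o => (oU o, oX o))].
  move=> P' s hP' hs hm.
  have hm1 : forall m, prob P' (fun o => M5 o == m) = 1 * prob P (fun o => M5 o == m).
    by move=> m; rewrite mul1r hm.
  split.
  - rewrite (@cmi_scaleB _ P P' _ _ _ (@oX X Y Z U V W) (@oW X Y Z U V W) _ s) //;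
      first by exact: (regroup3 (fun _ b _ => b)).
    move=> a c.
    rewrite (prob_margP (E' := fun m => (m.1.2, m.2, m.1.1.2) == c) hm1) //.
    rewrite (prob_margP (E' := fun m => (m.1.1.1.1 == a) && ((m.1.2, m.2, m.1.1.2) == c)) hm1) //.
    by rewrite !mul1r.
  - exact: expect_scale.
  - apply: (expect_marg (g := fun m => dz m.1.1.2 (zhat m.1.2 m.2 m.1.1.1.1)) _ hm) => //.
  - by apply: (cmi_marg (fA := fun m => m.1.1.1.2) (fB := fun m => m.1.2) (fC := fun m => m.1.1.2)
        _ _ _ hm).
  - by apply: (cmi_marg (fA := fun m => m.1.1.2) (fB := fun m => m.2)
        (fC := fun m => (m.1.2, m.1.1.1.1)) _ _ _ hm).
have [q1 q2 q3 q4 q5] := Q P s0 J0 s0ge (fun m => erefl).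
have [s [sge ssub scard seq [sc0 scs]]] := @reduce W (U * V * X)%type 'I_1 e c0 cs s0 s0ge s0pos.
have esum : forall j, \sum_w s w * e j w = q j.1.1 j.1.2 j.2.
  move=> j; rewrite seq.
  transitivity (\sum_w e j w).
    apply: eq_bigr => w _; case: (eqVneq (s0 w) 0) => [h|h]; first by rewrite h mul0r ez.
    by move: h; rewrite /s0; case: ifP; rewrite ?eqxx // => _ _; rewrite mul1r.
  by rewrite /e -big_distrr /= (channel_sum _ (hw _ _)) mulr1.
have [[x1 y1] h1] : exists xy : X * Y, pxy xy.1 xy.2 != 0 by apply: pos_exists; rewrite hxy1 oner_eq0.
have [z1 h2] : exists z, pzx x1 z != 0 by apply: pos_exists; rewrite (channel_sum _ hzx) oner_eq0.
have [u1 h3] : exists u, pu y1 u != 0 by apply: pos_exists; rewrite (channel_sum _ hu) oner_eq0.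
have [v1 h4] : exists v, pv u1 z1 v != 0 by apply: pos_exists; rewrite (channel_sum _ (hv _)) oner_eq0.
have hq1 : q u1 v1 x1 != 0.
  apply: (sum_ne0 (i0 := y1)) => [y|]; first by apply: sumr_ge0 => z _; apply: g0.
  apply: (sum_ne0 (i0 := z1)) => [z|]; first by apply: g0.
  by rewrite !mulf_neq0.
have [w0 hw0] : exists w, s w != 0.
  have : \sum_w s w * e (u1, v1, x1) w != 0 by rewrite esum.
  case/pos_exists => w hw'; exists w; apply: contra hw' => /eqP ->; by rewrite mul0r.
pose pw' := pws s w0.
have hw' : forall u v, channel (pw' u v).
  move=> u v x; split.
    move=> w; rewrite /pw' /pws; case: ifP => _; first by rewrite mulr_ge0 // (channel_ge0 _ _ (hw _ _)).
    by case: ifP.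
  rewrite /pw' /pws; case: (boolP (0 < q u v x)) => hp; rewrite ?hp ?(negbTE hp).
    have hpy : q u v x != 0 by rewrite gt_eqF.
    apply: (mulfI hpy); rewrite mulr1 -{2}(esum (u, v, x)) big_distrr; apply: eq_bigr => w _ /=.
    by rewrite /e; ring.
  by rewrite -big_mkcond big_pred1_eq.
have hval2 : valid pu pv pw' by split.
have hm : forall m, prob (joint pxy pzx pu pv pw') (fun o => M5 o == m) = prob P (fun o => M5 o == m).
  by case=> [[[[x y] z] u] v]; rewrite /M5 marg5 // marg5.
have [r1 r2 r3 r4 r5] := Q (joint pxy pzx pu pv pw') s (JS s w0) sge hm.
case: hgood => g1 g2 g3 g4 g5.
exists ({w : W | s w != 0} : finType).
split.
  rewrite card_sig -(card_ord 1) -!card_prod; apply: leq_trans scard.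
  by rewrite leq_eqVlt; apply/orP; left; apply/eqP; apply: eq_card => w; rewrite !inE.
apply: (@scheme_embed X Y Z Xh Zh pxy pzx dx dz Dx Dz U V W U V _ id id val r pu pv pw' xhat zhat) => //.
- exact: val_inj.
- by move=> y u h; move: (h u); rewrite eqxx.
- by move=> u z v h; move: (h v); rewrite eqxx.
- move=> u v x w h; case: (eqVneq (s w) 0) => [hz | hnz]; last by move: (h (exist _ w hnz)); rewrite eqxx.
  rewrite /pw' /pws hz mul0r; case: ifP => // _; case: eqP => // ew.
  by move: hw0; rewrite -ew hz eqxx.
split.
- by rewrite r4.
- by rewrite r5.
- by rewrite r1; apply: le_trans g3; rewrite q1.
- have := scs ord0; rewrite /cs /= => h.
  by rewrite r2; apply: le_trans g4; rewrite q2.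
- by rewrite r3.
Qed.

End RedU.

Section TS.
Variables (X Y Z Xh Zh : finType).
Variables (pxy : X -> Y -> R) (pzx : X -> Z -> R).
Variables (dx : X -> Xh -> R) (dz : Z -> Zh -> R) (Dx Dz : R).

Definition sab (U1 U2 : finType) (a b : R) (u : U1 + U2) : R :=
  match u with inl _ => 2 * a | inr _ => 2 * b end.

Lemma tsh (U1 U2 : finType) (c : U1 + U2 -> R) t :
  \sum_u sab t (1 - t) u * c u =
  t * (\sum_u sab 1 0 u * c u) + (1 - t) * (\sum_u sab 0 1 u * c u).
Proof.
rewrite !big_sumType /=.
rewrite -!(big_distrr (2 * _)) /=.
set A := \sum_i c (inl i); set B := \sum_i c (inr i).
ring.
Qed.

Lemma nonempty_sum (T : finType) (f : T -> R) : \sum_t f t = 1 -> exists t : T, True.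
Proof.
move=> h; have [t _] : exists t, f t != 0 by apply: pos_exists; rewrite h oner_eq0.
by exists t.
Qed.

Lemma conv (U1 V1 W1 U2 V2 W2 : finType) r1 r2 t :
  pmf (fun xy : X * Y => pxy xy.1 xy.2) -> channel pzx -> 0 <= t <= 1 ->
  achievable pxy pzx dx dz Dx Dz U1 V1 W1 r1 ->
  achievable pxy pzx dx dz Dx Dz U2 V2 W2 r2 ->
  achievable pxy pzx dx dz Dx Dz (U1 + U2)%type (V1 + V2)%type (W1 + W2)%type
    (t * r1.1.1 + (1 - t) * r2.1.1, t * r1.1.2 + (1 - t) * r2.1.2, t * r1.2 + (1 - t) * r2.2).
Proof.
move=> [hxy0 hxy1] hzx /andP [t0 t1].
move=> /achievableP [pu1 [pv1 [pw1 [xh1 [zh1 [[hu1 hv1 hw1] hg1]]]]]].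
move=> /achievableP [pu2 [pv2 [pw2 [xh2 [zh2 [[hu2 hv2 hw2] hg2]]]]]].
have [[x1 y1] _] : exists xy : X * Y, True by apply: nonempty_sum hxy1.
have [z1 _] : exists z : Z, True by apply: (nonempty_sum (channel_sum _ hzx)).
have [a1 _] : exists u : U1, True by apply: (nonempty_sum (channel_sum y1 hu1)).
have [a2 _] : exists u : U2, True by apply: (nonempty_sum (channel_sum y1 hu2)).
have [v1d _] : exists v : V1, True by apply: (nonempty_sum (channel_sum z1 (hv1 a1))).
have [v2d _] : exists v : V2, True by apply: (nonempty_sum (channel_sum z1 (hv2 a2))).
have [w1d _] : exists w : W1, True by apply: (nonempty_sum (channel_sum x1 (hw1 a1 v1d))).
have [w2d _] : exists w : W2, True by apply: (nonempty_sum (channel_sum x1 (hw2 a2 v2d))).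
pose pr1 (v : V1 + V2) : V1 := if v is inl v' then v' else v1d.
pose pr2 (v : V1 + V2) : V2 := if v is inr v' then v' else v2d.
pose qw1 (w : W1 + W2) : W1 := if w is inl w' then w' else w1d.
pose qw2 (w : W1 + W2) : W2 := if w is inr w' then w' else w2d.
pose pv' (u : U1 + U2) (z : Z) (v : V1 + V2) : R :=
  match u, v with inl u, inl v => pv1 u z v | inr u, inr v => pv2 u z v | _, _ => 0 end.
pose pw' (u : U1 + U2) (v : V1 + V2) (x : X) (w : W1 + W2) : R :=
  match u, w with inl u, inl w => pw1 u (pr1 v) x w | inr u, inr w => pw2 u (pr2 v) x w
  | _, _ => 0 end.
pose xh' (u : U1 + U2) (w : W1 + W2) (z : Z) : Xh :=
  match u with inl u => xh1 u (qw1 w) z | inr u => xh2 u (qw2 w) z end.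
pose zh' (u : U1 + U2) (v : V1 + V2) (x : X) : Zh :=
  match u with inl u => zh1 u (pr1 v) x | inr u => zh2 u (pr2 v) x end.
pose pug (a b : R) y (u : U1 + U2) : R :=
  match u with inl u => a * pu1 y u | inr u => b * pu2 y u end.
pose PP a b := joint pxy pzx (pug a b) pv' pw'.
have hv' : forall u, channel (pv' u).
  case=> u z; split.
  - by case=> v /=; rewrite ?lexx // (channel_ge0 _ _ (hv1 _), channel_ge0 _ _ (hv2 _)).
  - by rewrite big_sumType /= big1_eq ?addr0 ?add0r ?(channel_sum _ (hv1 _)) //.
  - by case=> v /=; rewrite ?lexx // (channel_ge0 _ _ (hv1 _), channel_ge0 _ _ (hv2 _)).
  - by rewrite big_sumType /= big1_eq ?addr0 ?add0r ?(channel_sum _ (hv2 _)).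
have hw' : forall u v, channel (pw' u v).
  case=> u v x; split.
  - by case=> w /=; rewrite ?lexx // (channel_ge0 _ _ (hw1 _ _), channel_ge0 _ _ (hw2 _ _)).
  - by rewrite big_sumType /= big1_eq ?addr0 ?add0r ?(channel_sum _ (hw1 _ _)).
  - by case=> w /=; rewrite ?lexx // (channel_ge0 _ _ (hw1 _ _), channel_ge0 _ _ (hw2 _ _)).
  - by rewrite big_sumType /= big1_eq ?addr0 ?add0r ?(channel_sum _ (hw2 _ _)).
have hval : forall a b, 0 <= a -> 0 <= b -> a + b = 1 -> valid (pug a b) pv' pw'.
  move=> a b a0 b0 ab; split => // y; split.
    by case=> u /=; rewrite mulr_ge0 // (channel_ge0 _ _ hu1, channel_ge0 _ _ hu2).
  by rewrite big_sumType /= -!big_distrr /= (channel_sum _ hu1) (channel_sum _ hu2) !mulr1.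
pose h : R := 2^-1.
have h0 : 0 <= h by rewrite /h invr_ge0.
have hh : h + h = 1 by rewrite /h; field.
pose P := PP h h.
have PPE : forall a b, PP a b = joint pxy pzx (pug a b) pv' pw' by [].
have JS : forall a b o, PP a b o = sab a b (@oU X Y Z (U1 + U2)%type (V1 + V2)%type (W1 + W2)%type o) * P o.
  by move=> a b [[[[[x y] z] [u|u]] v] w]; rewrite /P /PP /= /h; field.
pose c0 u := \sum_a \sum_b \sum_c
  (if (fun (_ : Y) (b : (U1 + U2)%type) (_ : Z) => b) a b c == u
   then cterm P (@oY X Y Z (U1 + U2)%type (V1 + V2)%type (W1 + W2)%type) (@oU X Y Z (U1 + U2)%type (V1 + V2)%type (W1 + W2)%type) (@oZ X Y Z (U1 + U2)%type (V1 + V2)%type (W1 + W2)%type) a b c else 0).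
pose f1 u := \sum_a \sum_b \sum_c
  (if (fun (_ : Z) (_ : (V1 + V2)%type) (c : (U1 + U2) * X) => c.1) a b c == u
   then cterm P (@oZ X Y Z (U1 + U2)%type (V1 + V2)%type (W1 + W2)%type) (@oV X Y Z (U1 + U2)%type (V1 + V2)%type (W1 + W2)%type) (fun o => (oU o, oX o)) a b c
   else 0).
pose f2 u := \sum_a \sum_b \sum_c
  (if (fun (_ : X) (_ : (W1 + W2)%type) (c : (U1 + U2) * (V1 + V2) * Z) => c.1.1) a b c == u
   then cterm P (@oX X Y Z (U1 + U2)%type (V1 + V2)%type (W1 + W2)%type) (@oW X Y Z (U1 + U2)%type (V1 + V2)%type (W1 + W2)%type)
          (fun o => (oU o, oV o, oZ o)) a b c else 0).
pose f3 u := \sum_o (if @oU X Y Z (U1 + U2)%type (V1 + V2)%type (W1 + W2)%type o == u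
   then P o * dx (oX o) (xh' (oU o) (oW o) (oZ o)) else 0).
pose f4 u := \sum_o (if @oU X Y Z (U1 + U2)%type (V1 + V2)%type (W1 + W2)%type o == u
   then P o * dz (oZ o) (zh' (oU o) (oV o) (oX o)) else 0).
have Q : forall a b, 0 <= a -> 0 <= b -> a + b = 1 ->
   [/\ cmi (PP a b) (@oY X Y Z (U1 + U2)%type (V1 + V2)%type (W1 + W2)%type) (@oU X Y Z (U1 + U2)%type (V1 + V2)%type (W1 + W2)%type) (@oZ X Y Z (U1 + U2)%type (V1 + V2)%type (W1 + W2)%type)
         = \sum_u sab a b u * c0 u,
       cmi (PP a b) (@oZ X Y Z (U1 + U2)%type (V1 + V2)%type (W1 + W2)%type) (@oV X Y Z (U1 + U2)%type (V1 + V2)%type (W1 + W2)%type) (fun o => (oU o, oX o))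
         = \sum_u sab a b u * f1 u,
       cmi (PP a b) (@oX X Y Z (U1 + U2)%type (V1 + V2)%type (W1 + W2)%type) (@oW X Y Z (U1 + U2)%type (V1 + V2)%type (W1 + W2)%type)
          (fun o => (oU o, oV o, oZ o)) = \sum_u sab a b u * f2 u,
       expect (PP a b) (fun o => dx (oX o) (xh' (oU o) (oW o) (oZ o))) = \sum_u sab a b u * f3 u &
       expect (PP a b) (fun o => dz (oZ o) (zh' (oU o) (oV o) (oX o))) = \sum_u sab a b u * f4 u].
  move=> aa bb a0 b0 ab.
  have hs : forall u : (U1 + U2)%type, 0 <= sab aa bb u by case=> uu /=; rewrite mulr_ge0.
  have hm1 : forall m, prob (PP aa bb) (fun o => (oX o, oY o, oZ o) == m) =
      1 * prob P (fun o => (oX o, oY o, oZ o) == m).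
    case=> [[x y] z]; rewrite mul1r /P !PPE; transitivity (pxy x y * pzx x z); [apply: marg3 | symmetry; apply: marg3]; apply: hval => //.
  split.
  - rewrite (@cmi_scaleB _ P (PP aa bb) _ _ _ _ _ _ (sab aa bb)) //;
      first by exact: (regroup3 (fun _ b _ => b)).
    move=> a' c.
    rewrite (prob_margP (E' := fun m => m.2 == c) hm1) //.
    rewrite (prob_margP (E' := fun m => (m.1.2 == a') && (m.2 == c)) hm1) //.
    by rewrite !mul1r.
  - rewrite (@cmi_scaleC _ P (PP aa bb) _ _ _ _ _ _ (fun c => sab aa bb c.1)) //.
    exact: (regroup3 (fun _ _ c => c.1)).
  - rewrite (@cmi_scaleC _ P (PP aa bb) _ _ _ _ _ _ (fun c => sab aa bb c.1.1)) //.
    exact: (regroup3 (fun _ _ c => c.1.1)).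
  - exact: expect_scale.
  - exact: expect_scale.
have t1' : 0 <= 1 - t by rewrite subr_ge0.
have [qt1 qt2 qt3 qt4 qt5] := Q t (1 - t) t0 t1' ltac:(by rewrite addrC subrK).
have [qa1 qa2 qa3 qa4 qa5] := Q 1 0 ler01 (lexx 0) ltac:(by rewrite addr0).
have [qb1 qb2 qb3 qb4 qb5] := Q 0 1 (lexx 0) ler01 ltac:(by rewrite add0r).
pose phi1 (o : X * Y * Z * U1 * V1 * W1) : X * Y * Z * (U1 + U2) * (V1 + V2) * (W1 + W2) :=
  let: (x, y, z, u, v, w) := o in (x, y, z, inl u, inl v, inl w).
pose phi2 (o : X * Y * Z * U2 * V2 * W2) : X * Y * Z * (U1 + U2) * (V1 + V2) * (W1 + W2) :=
  let: (x, y, z, u, v, w) := o in (x, y, z, inr u, inr v, inr w).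
have iphi1 : injective phi1.
  by move=> [[[[[x y] z] u] v] w] [[[[[x' y'] z'] u'] v'] w'] /= [-> -> -> -> -> ->].
have iphi2 : injective phi2.
  by move=> [[[[[x y] z] u] v] w] [[[[[x' y'] z'] u'] v'] w'] /= [-> -> -> -> -> ->].
have E1 : forall o, PP 1 0 (phi1 o) = joint pxy pzx pu1 pv1 pw1 o.
  by move=> [[[[[x y] z] u] v] w]; rewrite /PP /= mul1r.
have E2 : forall o, PP 0 1 (phi2 o) = joint pxy pzx pu2 pv2 pw2 o.
  by move=> [[[[[x y] z] u] v] w]; rewrite /PP /= mul1r.
have Z1 : forall o', (forall o, phi1 o != o') -> PP 1 0 o' = 0.
  move=> [[[[[x y] z] [u|u]] [v|v]] [w|w]] hn; rewrite /PP /= ?(mul0r, mulr0) //.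
  by move: (hn (x, y, z, u, v, w)); rewrite eqxx.
have Z2 : forall o', (forall o, phi2 o != o') -> PP 0 1 o' = 0.
  move=> [[[[[x y] z] [u|u]] [v|v]] [w|w]] hn; rewrite /PP /= ?(mul0r, mulr0) //.
  by move: (hn (x, y, z, u, v, w)); rewrite eqxx.
case: hg1 => g11 g12 g13 g14 g15.
case: hg2 => g21 g22 g23 g24 g25.
have comb : forall (A C D F1 F2 : R), A = t * C + (1 - t) * D -> C = F1 -> D = F2 ->
    forall (r1 r2 : R), F1 <= r1 -> F2 <= r2 -> A <= t * r1 + (1 - t) * r2.
  move=> A C D F1 F2 -> -> -> r1' r2' l1 l2.
  by apply: lerD; apply: ler_wpM2l.
apply/achievableP; exists (pug t (1 - t)), pv', pw', xh', zh'; split.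
  by apply: hval => //; rewrite addrC subrK.
split.
- apply: (comb _ _ _ _ _ _ _ _ _ _ g11 g21); first by rewrite qt1 tsh -qa1 -qb1.
  + by apply: (cmi_embed (phi := phi1) (fa := id) (fb := inl) (fc := id)) => //;
      (try by case=> [[[[[x y] z] u] v] w]); try by move=> ? ? [].
  + by apply: (cmi_embed (phi := phi2) (fa := id) (fb := inr) (fc := id)) => //;
      (try by case=> [[[[[x y] z] u] v] w]); try by move=> ? ? [].
- apply: (comb _ _ _ _ _ _ _ _ _ _ g12 g22); first by rewrite qt2 tsh -qa2 -qb2.
  + apply: (cmi_embed (phi := phi1) (fa := id) (fb := inl) (fc := fun p => (inl p.1, p.2))) => //;
      (try by case=> [[[[[x y] z] u] v] w]); try by move=> ? ? [].
    by move=> [a b] [c d] /= [-> ->].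
  + apply: (cmi_embed (phi := phi2) (fa := id) (fb := inr) (fc := fun p => (inr p.1, p.2))) => //;
      (try by case=> [[[[[x y] z] u] v] w]); try by move=> ? ? [].
    by move=> [a b] [c d] /= [-> ->].
- apply: (comb _ _ _ _ _ _ _ _ _ _ g13 g23); first by rewrite qt3 tsh -qa3 -qb3.
  + apply: (cmi_embed (phi := phi1) (fa := id) (fb := inl)
            (fc := fun p => (inl p.1.1, inl p.1.2, p.2))) => //;
      (try by case=> [[[[[x y] z] u] v] w]); try by move=> ? ? [].
    by move=> [[a b] c] [[a' b'] c'] /= [-> -> ->].
  + apply: (cmi_embed (phi := phi2) (fa := id) (fb := inr)
            (fc := fun p => (inr p.1.1, inr p.1.2, p.2))) => //;
      (try by case=> [[[[[x y] z] u] v] w]); try by move=> ? ? [].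
    by move=> [[a b] c] [[a' b'] c'] /= [-> -> ->].
- apply: (@le_trans _ _ (t * Dx + (1 - t) * Dx)); last by rewrite -mulrDl addrC subrK mul1r.
  apply: (comb _ _ _ _ _ _ _ _ _ _ g14 g24).
  + by rewrite qt4 tsh -qa4 -qb4.
  + rewrite (@expect_embed _ _ phi1 (joint pxy pzx pu1 pv1 pw1)) //.
    by apply: eq_bigr => -[[[[[x y] z] u] v] w] _.
  + rewrite (@expect_embed _ _ phi2 (joint pxy pzx pu2 pv2 pw2)) //.
    by apply: eq_bigr => -[[[[[x y] z] u] v] w] _.
- apply: (@le_trans _ _ (t * Dz + (1 - t) * Dz)); last by rewrite -mulrDl addrC subrK mul1r.
  apply: (comb _ _ _ _ _ _ _ _ _ _ g15 g25).
  + by rewrite qt5 tsh -qa5 -qb5.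
  + rewrite (@expect_embed _ _ phi1 (joint pxy pzx pu1 pv1 pw1)) //.
    by apply: eq_bigr => -[[[[[x y] z] u] v] w] _.
  + rewrite (@expect_embed _ _ phi2 (joint pxy pzx pu2 pv2 pw2)) //.
    by apply: eq_bigr => -[[[[[x y] z] u] v] w] _.
Qed.

End TS.

Theorem lemma1 (X Y Z Xh Zh : finType)
    (pxy : X -> Y -> R) (pzx : X -> Z -> R)
    (dx : X -> Xh -> R) (dz : Z -> Zh -> R) (Dx Dz : R) :
  pmf (fun xy : X * Y => pxy xy.1 xy.2) ->
  channel pzx ->
  (forall x xh, 0 <= dx x xh) ->
  (forall z zh, 0 <= dz z zh) ->
  (forall (r1 r2 : R * R * R) (t : R),
      region pxy pzx dx dz Dx Dz r1 -> region pxy pzx dx dz Dx Dz r2 ->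
      0 <= t <= 1 ->
      region pxy pzx dx dz Dx Dz
        (t * r1.1.1 + (1 - t) * r2.1.1,
         t * r1.1.2 + (1 - t) * r2.1.2,
         t * r1.2 + (1 - t) * r2.2))
  /\
  (forall r : R * R * R,
      region pxy pzx dx dz Dx Dz r <-> region_card pxy pzx dx dz Dx Dz r).
Proof.
move=> hxy hzx _ _; split.
  move=> r1 r2 t [U1 [V1 [W1 h1]]] [U2 [V2 [W2 h2]]] ht.
  by exists (U1 + U2)%type, (V1 + V2)%type, (W1 + W2)%type; apply: conv.
move=> r; split.
  move=> [U [V [W h]]].
  have [U' [cu h1]] := redU hxy hzx h.
  have [V' [cv h2]] := redV hxy hzx h1.
  have [W' [cw h3]] := redW hxy hzx h2.
  by exists U', V', W'; split.
by move=> [U [V [W [_ _ _ h]]]]; exists U, V, W.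
Qed.
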